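(* There exist a connected discrete-time interconnection $\Lambda=[\lambda_{ij}]\in\mathbb{R}^{p\times p}$ and a map $Q:\mathbb{N}\to\overline{\mathcal Q}_n$ satisfying $$\liminf_{N\to\infty}\frac1N\,\sigma_{\min}\Big(\sum_{k=0}^NQ_k\Big)>0$$ such that the solutions $x_i(\cdot)$ of $x_i^+=x_i+Q_k\sum_{j\ne i}\lambda_{ij}(x_j-x_i)$ do not synchronize (for some initial condition).
   Context: $\sigma_{\min}$ smallest singular value; $\overline{\mathcal Q}_n$ symmetric positive semidefinite $n\times n$ matrices with induced 2-norm at most $1$. Discrete-time interconnection: $\lambda_{ij}\ge0$, row sums $1$; graph edge $(n_i,n_j)$ iff $\lambda_{ij}>0$; connected if some node is reachable by a directed path from every other node. Sequences $x_i$ synchronize if there is $\bar x$ with $|x_i(k)-\bar x(k)|\to0$ for all $i$. *)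

(* Defs.v *)
From HB Require Import structures.
From mathcomp Require Import all_boot all_order all_algebra.
From mathcomp Require Import all_classical all_reals all_analysis.
Set Implicit Arguments. Unset Strict Implicit. Unset Printing Implicit Defensive.
Import Order.TTheory GRing.Theory Num.Theory.
Import numFieldNormedType.Exports.
Local Open Scope ring_scope.
Local Open Scope classical_set_scope.

Section Defs.
Variable R : realType.

Definition vnorm (n : nat) (v : 'cV[R]_n) : R :=
  Num.sqrt (\sum_(i < n) v i 0 ^+ 2).

Definition sigma_min (n : nat) (A : 'M[R]_n) : R :=
  inf [set s : R | exists2 l : R, eigenvalue (A^T *m A) l & s = Num.sqrt l].

Definition in_Qbar (n : nat) (Q : 'M[R]_n) : Prop :=
  Q^T = Q /\
  (forall v : 'cV[R]_n, 0 <= (v^T *m Q *m v) 0 0) /\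
  (forall v : 'cV[R]_n, vnorm (Q *m v) <= vnorm v).

Definition interconnection (p : nat) (L : 'M[R]_p) : Prop :=
  (forall i j, 0 <= L i j) /\ (forall i, \sum_(j < p) L i j = 1).

Definition edge (p : nat) (L : 'M[R]_p) : rel 'I_p := fun i j => 0 < L i j.

Definition connected_graph (p : nat) (L : 'M[R]_p) : Prop :=
  exists r : 'I_p, forall i : 'I_p, connect (edge L) i r.

Fixpoint traj (p n : nat) (L : 'M[R]_p) (Q : nat -> 'M[R]_n)
    (x0 : 'I_p -> 'cV[R]_n) (k : nat) : 'I_p -> 'cV[R]_n :=
  match k with
  | 0 => x0
  | k'.+1 => fun i =>
      traj L Q x0 k' i +
      Q k' *m (\sum_(j < p | j != i) L i j *: (traj L Q x0 k' j - traj L Q x0 k' i))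
  end.

Definition synchronize (p n : nat) (x : nat -> 'I_p -> 'cV[R]_n) : Prop :=
  exists xbar : nat -> 'cV[R]_n,
    forall i : 'I_p, (fun k => vnorm (x k i - xbar k)) @ \oo --> (0 : R^o).

End Defs.

(* Main.v *)
Require Import Defs.
From HB Require Import structures.
From mathcomp Require Import all_boot all_order all_algebra.
From mathcomp Require Import all_classical all_reals all_analysis.
Import Order.TTheory GRing.Theory Num.Theory.
Local Open Scope ring_scope.
Local Open Scope classical_set_scope.

Section Aux.
Variable R : realType.

Definition L2 : 'M[R]_2 := \matrix_(i, j) (i != j)%:R.
Definition Q1 : nat -> 'M[R]_1 := fun _ => 1.

Lemma vnorm1 (v : 'cV[R]_1) : vnorm v = `|v 0 0|.
Proof. by rewrite /vnorm big_ord1 sqrtr_sqr. Qed.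

Lemma eig1 (M : 'M[R]_1) l : eigenvalue M l <-> l = M 0 0.
Proof.
split.
- move/eigenvalueP=> [v Hv vn0].
  have v0 : v 0 0 != 0.
    apply: contra vn0 => /eqP h; apply/eqP/matrixP => i j.
    by rewrite !ord1 mxE h.
  have := congr1 (fun A : 'M[R]_1 => A 0 0) Hv; rewrite /= !mxE big_ord1 => h.
  by apply: (mulfI v0); rewrite h mulrC.
- move=> ->; apply/eigenvalueP; exists (const_mx 1).
    apply/matrixP => i j; rewrite !ord1 !mxE big_ord1 mxE; by rewrite mul1r mulr1.
  apply/eqP => /matrixP /(_ 0 0); rewrite !mxE; exact/eqP/oner_neq0.
Qed.

Lemma sigma_min1 (A : 'M[R]_1) : 0 <= A 0 0 -> sigma_min A = A 0 0.
Proof.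
move=> A0; rewrite /sigma_min.
have -> : [set s : R | exists2 l : R, eigenvalue (A^T *m A) l & s = Num.sqrt l]
   = [set A 0 0].
  apply/seteqP; split => s /=.
  - move=> [l /eig1 -> ->]; rewrite !mxE big_ord1 mxE -expr2 sqrtr_sqr.
    by rewrite ger0_norm.
  - move=> ->; exists ((A^T *m A) 0 0); first exact/eig1.
    by rewrite !mxE big_ord1 mxE -expr2 sqrtr_sqr ger0_norm.
exact: inf1.
Qed.

Lemma step (y : 'I_2 -> 'cV[R]_1) i :
  y i + 1 *m (\sum_(j < 2 | j != i) L2 i j *: (y j - y i))
  = y (if i == 0 then 1 else 0).
Proof.
rewrite mul1mx big_mkcond big_ord_recr big_ord1 /= !mxE.
case: i => [[|[|//]]] Hi /=.
- rewrite scale1r add0r addrC subrK; congr y; exact/val_inj.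
- rewrite scale1r addr0 addrC subrK; congr y; exact/val_inj.
Qed.

Definition x0 : 'I_2 -> 'cV[R]_1 := fun i => if i == 0 then 1 else -1.

Lemma inv k : (traj L2 Q1 x0 k 0 = 1 /\ traj L2 Q1 x0 k 1 = -1) \/
              (traj L2 Q1 x0 k 0 = -1 /\ traj L2 Q1 x0 k 1 = 1).
Proof.
elim: k => [|k IH]; first by left.
rewrite /= /Q1 !step /=.
by case: IH => [[-> ->]|[-> ->]]; [right|left].
Qed.

Lemma key k (b : 'cV[R]_1) :
  2 <= vnorm (traj L2 Q1 x0 k 0 - b) + vnorm (traj L2 Q1 x0 k 1 - b).
Proof.
rewrite !vnorm1 !mxE.
have H : `|traj L2 Q1 x0 k 0 0 0 - traj L2 Q1 x0 k 1 0 0| = 2.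
  case: (inv k) => [[-> ->]|[-> ->]]; rewrite !mxE /=.
    by rewrite opprK ger0_norm.
  by rewrite -opprD normrN ger0_norm.
rewrite -H; apply: le_trans (ler_normB _ _).
by rewrite opprB addrA subrK.
Qed.

End Aux.

Theorem theorem15 (R : realType) :
  exists (p n : nat) (L : 'M[R]_p) (Q : nat -> 'M[R]_n),
    (0 < n)%N /\
    interconnection L /\
    connected_graph L /\
    (forall k : nat, in_Qbar (Q k)) /\
    (0%E < limn_einf (fun N : nat =>
          (((N%:R)^-1 * sigma_min (\sum_(0 <= k < N.+1) Q k)) : R)%:E))%E /\
    (exists x0 : 'I_p -> 'cV[R]_n, ~ synchronize (traj L Q x0)).
Proof.
exists 2%N, 1%N, (L2 R), (Q1 R).
split; first by [].
split.
  split; first by move=> i j; rewrite mxE ler0n.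
  move=> i; rewrite big_ord_recr big_ord1 /= !mxE.
  by case: i => [[|[|//]]] ? /=; rewrite ?add0r ?addr0.
split.
  exists 0 => i; case: i => [[|[|//]]] Hi.
    by have -> : Ordinal Hi = 0 by apply/val_inj.
  apply: connect1; by rewrite /edge mxE /= ltr01.
split.
  move=> k; rewrite /Q1; split; first exact: trmx1.
  split; first by move=> v; rewrite mulmx1 !mxE big_ord1 mxE -expr2 sqr_ge0.
  by move=> v; rewrite mul1mx.
split.
  rewrite limn_einf_lim (cvg_lim _ (@cvg_einfs_sup _ _))//.
  apply: (@lt_le_trans _ _ 1%E); first by rewrite lte_fin ltr01.
  apply: le_trans; last by apply: ereal_sup_ubound; exists 1%N.
  rewrite /einfs /=; apply: le_ereal_inf_tmp => _ [k /= k1 <-].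
  rewrite lee_fin /Q1 sumr_const_nat subn0.
  have Hs : (1 *+ k.+1 : 'M[R]_1) 0 0 = k.+1%:R by rewrite mulmxnE mxE.
  rewrite sigma_min1 Hs ?ler0n // ler_pdivlMl ?ltr0n // mulr1 ler_nat.
  by [].
exists (x0 R) => -[xbar H].
have /cvgrPdist_lt h0 := H 0.
have /cvgrPdist_lt h1 := H 1.
have [k [A B]] := filter_ex (filterI (h0 1 ltr01) (h1 1 ltr01)).
move: A B; rewrite /= !sub0r !normrN !ger0_norm ?sqrtr_ge0 // => A B.
have := @key R k (xbar k).
by rewrite leNgt (lt_le_trans (ltrD A B)) // -natrD.
Qed.
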